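(* Let $p$ be an integer with $1\le p\le13$. There exist constants $c,C>0$ such that for every polynomial $\eta\in\mathbf P^p([-1,1])$ with $\eta(-1)=0$ there exists $\psi\in\mathbf P^{p-1}([-1,1])$ with $\psi(1)=\eta(1)$, $$J(\psi;\eta):=\int_{-1}^1\Big(\eta\psi-\frac14(\eta-\psi)^2\Big)dx\ge c\int_{-1}^1\eta^2\,dx,\qquad\int_{-1}^1\psi^2\,dx\le C\int_{-1}^1\eta^2\,dx.$$
   Context: $\mathbf P^q([-1,1])$ denotes the space of real polynomials of degree at most $q$ on $[-1,1]$. *)

(* Defs.v *)
From Stdlib Require Import Reals.
From Coquelicot Require Import Coquelicot.
Open Scope R_scope.

(* f is (the restriction to [-1,1] of) a real polynomial of degree at most q:
   f x = sum_{k=0}^q a_k x^k.  (sum_f_R0 g q = g 0 + ... + g q.) *)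
Definition is_poly_deg (q : nat) (f : R -> R) : Prop :=
  exists a : nat -> R, forall x, f x = sum_f_R0 (fun k => a k * x ^ k) q.

Definition sqnorm (f : R -> R) : R := RInt (fun x => (f x) ^ 2) (-1) 1.

Definition J (psi eta : R -> R) : R :=
  RInt (fun x => eta x * psi x - / 4 * (eta x - psi x) ^ 2) (-1) 1.

(* Main.v *)
Require Import Defs.
From Stdlib Require Import Reals Lra Lia ZArith QArith Qreals.
From Coquelicot Require Import Coquelicot.
Open Scope R_scope.

Definition w (k : nat) : R := if Nat.even k then Q2R (2 # Pos.of_succ_nat k) else 0.

Definition P (a : nat -> R) (n : nat) (x : R) : R := sum_f_R0 (fun k => a k * x ^ k) n.

Definition B (a : nat -> R) (n : nat) (b : nat -> R) (m : nat) : R :=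
  sum_f_R0 (fun i => sum_f_R0 (fun j => a i * b j * w (i + j)) m) n.

Lemma m1pow (k : nat) : 1 - (-1) ^ (S k) = if Nat.even k then 2 else 0.
Proof.
  assert (H : forall k, (-1) ^ k = (if Nat.even k then 1 else -1) /\
                        (-1) ^ (S k) = (if Nat.even k then -1 else 1)).
  { induction k0 as [|k0 IH]. simpl. split; ring.
    destruct IH as [H1 H2]. rewrite Nat.even_succ, <- Nat.negb_even.
    split. rewrite H2. destruct (Nat.even k0); reflexivity.
    simpl. simpl in H2. rewrite H2. destruct (Nat.even k0); simpl; ring. }
  destruct (H k) as [_ H2]. rewrite H2. destruct (Nat.even k); ring.
Qed.

Lemma is_RInt_pow (k : nat) : is_RInt (fun x => x ^ k) (-1) 1 (w k).
Proof.
  assert (Hk : INR (S k) <> 0) by (apply not_0_INR; lia).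
  replace (w k) with (minus ((fun x => x ^ (S k) / INR (S k)) 1)
                            ((fun x => x ^ (S k) / INR (S k)) (-1))).
  - apply (is_RInt_derive (fun x => x ^ (S k) / INR (S k))).
    + intros x _.
      apply is_derive_ext with (f := fun x => / INR (S k) * x ^ (S k)).
      { intros t. simpl. field. exact Hk. }
      replace (x ^ k) with (/ INR (S k) * (INR (S k) * 1 * x ^ Nat.pred (S k))).
      2:{ simpl Nat.pred. field. exact Hk. }
      apply is_derive_scal. apply (is_derive_pow (fun x => x)). apply (is_derive_id (K:=R_AbsRing)).
    + intros x _. apply (ex_derive_continuous (fun x => x ^ k)). auto_derive. auto.
  - unfold minus, plus, opp. cbn -[pow INR]. unfold w.
    assert (HQ : Q2R (2 # Pos.of_succ_nat k) = 2 / INR (S k)).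
    { unfold Q2R. simpl Qnum. simpl Qden. rewrite INR_IZR_INZ.
      rewrite Zpos_P_of_succ_nat, <- Nat2Z.inj_succ. reflexivity. }
    rewrite HQ.
    rewrite pow1.
    replace (1 / INR (S k) + - ((-1) ^ S k / INR (S k))) with ((1 - (-1) ^ S k) / INR (S k))
      by (field; exact Hk).
    rewrite m1pow. destruct (Nat.even k); unfold Rdiv; ring.
Qed.

Lemma RIplus (f g : R -> R) (If Ig : R) :
  is_RInt f (-1) 1 If -> is_RInt g (-1) 1 Ig -> is_RInt (fun x => f x + g x) (-1) 1 (If + Ig).
Proof. intros H1 H2. exact (is_RInt_plus _ _ _ _ _ _ H1 H2). Qed.

Lemma RIscal (f : R -> R) (k If : R) :
  is_RInt f (-1) 1 If -> is_RInt (fun x => k * f x) (-1) 1 (k * If).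
Proof. intros H1. exact (is_RInt_scal _ _ _ k _ H1). Qed.

Lemma RIext (f g : R -> R) (I : R) :
  (forall x, f x = g x) -> is_RInt f (-1) 1 I -> is_RInt g (-1) 1 I.
Proof. intros H. apply is_RInt_ext. intros; auto. Qed.

Lemma RI_mono (i : nat) (c : R) (b : nat -> R) (m : nat) :
  is_RInt (fun x => c * x ^ i * P b m x) (-1) 1 (sum_f_R0 (fun j => c * b j * w (i + j)) m).
Proof.
  induction m as [|m IH].
  - apply RIext with (f := fun x => (c * b 0%nat) * x ^ (i + 0)).
    + intros x. rewrite Nat.add_0_r. unfold P. simpl. ring.
    + apply RIscal. apply is_RInt_pow.
  - rewrite tech5. apply RIext with (f := fun x => c * x ^ i * P b m x + (c * b (S m)) * x ^ (i + S m)).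
    + intros x. unfold P. rewrite tech5, pow_add. ring.
    + apply RIplus. exact IH. apply RIscal. apply is_RInt_pow.
Qed.

Lemma RI_B (a : nat -> R) (n : nat) (b : nat -> R) (m : nat) :
  is_RInt (fun x => P a n x * P b m x) (-1) 1 (B a n b m).
Proof.
  unfold B. induction n as [|n IH].
  - simpl. apply RIext with (f := fun x => a 0%nat * x ^ 0 * P b m x).
    + intros x. unfold P. simpl. ring.
    + apply RI_mono.
  - simpl. apply RIext with (f := fun x => P a n x * P b m x + a (S n) * x ^ (S n) * P b m x).
    + intros x. unfold P. rewrite tech5. ring.
    + apply RIplus. exact IH. apply RI_mono.
Qed.

Lemma RI_comb (a : nat -> R) (n : nat) (b : nat -> R) (m : nat) (u v t : R) :
  is_RInt (fun x => u * (P a n x * P a n x) + v * (P a n x * P b m x) + t * (P b m x * P b m x)) (-1) 1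
    (u * B a n a n + v * B a n b m + t * B b m b m).
Proof.
  apply RIplus. apply RIplus. apply RIscal, RI_B. apply RIscal, RI_B. apply RIscal, RI_B.
Qed.

Definition KeyP (p : nat) := forall a : nat -> R,
  sum_f_R0 (fun k => a k * (-1) ^ k) p = 0 ->
  exists b : nat -> R, sum_f_R0 b (p - 1) = sum_f_R0 a p /\
    3 / 2 * B a p b (p - 1) - / 4 * B a p a p - / 4 * B b (p - 1) b (p - 1) >= / 100 * B a p a p.

Lemma main_from_key (p : nat) (K : KeyP p) :
  exists c C : R, 0 < c /\ 0 < C /\
    forall eta : R -> R, is_poly_deg p eta -> eta (-1) = 0 ->
      exists psi : R -> R, is_poly_deg (p - 1) psi /\ psi 1 = eta 1 /\
        J psi eta >= c * sqnorm eta /\ sqnorm psi <= C * sqnorm eta.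
Proof.
  exists (/ 100), 34. split; [lra|]. split; [lra|].
  intros eta [a Ha] H1.
  assert (Hc : sum_f_R0 (fun k => a k * (-1) ^ k) p = 0) by (rewrite <- Ha; exact H1).
  destruct (K a Hc) as [b [Hb1 Hb2]].
  exists (P b (p - 1)). split; [exists b; reflexivity|]. split.
  { unfold P. rewrite Ha.
    assert (E1 : sum_f_R0 (fun k => b k * 1 ^ k) (p - 1) = sum_f_R0 b (p - 1))
      by (apply sum_eq; intros; rewrite pow1; ring).
    assert (E2 : sum_f_R0 (fun k => a k * 1 ^ k) p = sum_f_R0 a p)
      by (apply sum_eq; intros; rewrite pow1; ring).
    rewrite E1, E2. exact Hb1. }
  assert (HJ : J (P b (p - 1)) eta = 3 / 2 * B a p b (p - 1) - / 4 * B a p a p - / 4 * B b (p - 1) b (p - 1)).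
  { unfold J. apply is_RInt_unique.
    replace (3 / 2 * B a p b (p - 1) - / 4 * B a p a p - / 4 * B b (p - 1) b (p - 1))
      with (- / 4 * B a p a p + 3 / 2 * B a p b (p - 1) + - / 4 * B b (p - 1) b (p - 1)) by field.
    eapply RIext; [|apply RI_comb]. intros x. cbv beta. rewrite Ha. fold (P a p x). field. }
  assert (Hna : sqnorm eta = B a p a p).
  { unfold sqnorm. apply is_RInt_unique. eapply RIext; [|apply RI_B].
    intros x. cbv beta. rewrite Ha. fold (P a p x). ring. }
  assert (Hnb : sqnorm (P b (p - 1)) = B b (p - 1) b (p - 1)).
  { unfold sqnorm. apply is_RInt_unique. eapply RIext; [|apply RI_B].
    intros x. cbv beta. ring. }
  assert (Hpa : 0 <= B a p a p).
  { apply (is_RInt_ge_0 _ _ _ _ (ltac:(lra) : -1 <= 1) (RI_B a p a p)). intros x _. cbv beta. apply Rle_0_sqr. }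
  assert (Hsq : 0 <= 36 * B a p a p + -12 * B a p b (p - 1) + 1 * B b (p - 1) b (p - 1)).
  { apply (is_RInt_ge_0 _ _ _ _ (ltac:(lra) : -1 <= 1) (RI_comb a p b (p - 1) 36 (-12) 1)). intros x _. cbv beta. pose proof (Rle_0_sqr (6 * P a p x - P b (p - 1) x)). unfold Rsqr in *. nra. }
  rewrite HJ, Hna, Hnb. split; lra.
Qed.

From Stdlib Require Import List.
Open Scope list_scope.
Open Scope R_scope.

Fixpoint evL (k : nat) (l : list Z) (a : nat -> R) : R :=
  match l with nil => 0 | z :: l' => IZR z * a k + evL (S k) l' a end.

Fixpoint addL (l1 l2 : list Z) : list Z :=
  match l1, l2 with
  | nil, _ => l2
  | _, nil => l1
  | x :: l1', y :: l2' => (x + y)%Z :: addL l1' l2'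
  end.

Definition scaleL (c : Z) (l : list Z) : list Z := List.map (Z.mul c) l.

Lemma evL_add k l1 l2 a : evL k (addL l1 l2) a = evL k l1 a + evL k l2 a.
Proof.
  revert k l2; induction l1 as [|x l1 IH]; intros k l2; destruct l2 as [|y l2]; simpl; try ring.
  rewrite IH, plus_IZR. ring.
Qed.

Lemma evL_scale k c l a : evL k (scaleL c l) a = IZR c * evL k l a.
Proof.
  revert k; induction l as [|x l IH]; intros k; simpl; try ring.
  rewrite IH, mult_IZR. ring.
Qed.

Lemma evL_zero k l a : forallb (Z.eqb 0) l = true -> evL k l a = 0.
Proof.
  revert k; induction l as [|x l IH]; intros k H; simpl in *. reflexivity.
  apply andb_prop in H. destruct H as [H1 H2]. destruct x; try discriminate H1.
  rewrite IH by exact H2. ring.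
Qed.

Fixpoint evQ (k : nat) (M : list (list Z)) (a : nat -> R) : R :=
  match M with nil => 0 | r :: M' => a k * evL 0 r a + evQ (S k) M' a end.

Fixpoint addQ (M N : list (list Z)) : list (list Z) :=
  match M, N with
  | nil, _ => N
  | _, nil => M
  | r :: M', s :: N' => addL r s :: addQ M' N'
  end.

Definition scaleQ (c : Z) (M : list (list Z)) : list (list Z) := List.map (scaleL c) M.

Lemma evQ_add k M N a : evQ k (addQ M N) a = evQ k M a + evQ k N a.
Proof.
  revert k N; induction M as [|r M IH]; intros k N; destruct N as [|s N]; simpl; try ring.
  rewrite IH, evL_add. ring.
Qed.

Lemma evQ_scale k c M a : evQ k (scaleQ c M) a = IZR c * evQ k M a.
Proof.
  revert k; induction M as [|r M IH]; intros k; simpl; try ring.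
  rewrite IH, evL_scale. ring.
Qed.

Lemma evQ_zero k M a : forallb (forallb (Z.eqb 0)) M = true -> evQ k M a = 0.
Proof.
  revert k; induction M as [|r M IH]; intros k H; simpl in *. reflexivity.
  apply andb_prop in H. destruct H as [H1 H2].
  rewrite IH by exact H2. rewrite (evL_zero 0 r a H1). ring.
Qed.

Definition eqQ (M N : list (list Z)) : bool :=
  forallb (forallb (Z.eqb 0)) (addQ M (scaleQ (-1) N)).

Lemma eqQ_ev M N a : eqQ M N = true -> evQ 0 M a = evQ 0 N a.
Proof.
  intros H. pose proof (evQ_zero 0 _ a H) as H0.
  rewrite evQ_add, evQ_scale in H0. lra.
Qed.

Definition outer (x y : list Z) : list (list Z) := List.map (fun c => scaleL c y) x.

Lemma evQ_outer k x y a : evQ k (outer x y) a = evL k x a * evL 0 y a.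
Proof.
  revert k; induction x as [|c x IH]; intros k; simpl; try ring.
  rewrite IH, evL_scale. ring.
Qed.

Definition souter (x y : list Z) : list (list Z) := addQ (outer x y) (outer y x).

Lemma evQ_souter x y a : evQ 0 (souter x y) a = 2 * (evL 0 x a * evL 0 y a).
Proof. unfold souter. rewrite evQ_add, !evQ_outer. ring. Qed.

Fixpoint sumQ (f : nat -> list (list Z)) (n : nat) : list (list Z) :=
  match n with O => f O | S n' => addQ (sumQ f n') (f (S n')) end.

Lemma sumQ_ev (c : R) (f : nat -> R) (g : nat -> list (list Z)) (n : nat) (a : nat -> R) :
  (forall i, (i <= n)%nat -> c * f i = evQ 0 (g i) a) ->
  c * sum_f_R0 f n = evQ 0 (sumQ g n) a.
Proof.
  induction n as [|n IH]; intros H; simpl.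
  - apply H. lia.
  - rewrite evQ_add, <- IH. rewrite <- H by lia. ring. intros i Hi. apply H. lia.
Qed.

Definition WL : Z := 27 * 25 * 7 * 11 * 13 * 17 * 19 * 23.
Definition wZ (k : nat) : Z := if Nat.even k then (2 * WL / Z.of_nat (S k))%Z else 0%Z.

Lemma w_aux (P : positive) (z : Z) : (2 * WL = z * Zpos P)%Z -> Q2R (2 # P) * IZR WL = IZR z.
Proof.
  intros H. unfold Q2R. cbv [Qnum Qden].
  assert (HP : IZR (Zpos P) <> 0) by (apply not_0_IZR; discriminate).
  apply (Rmult_eq_reg_r (IZR (Zpos P))); [|exact HP].
  rewrite <- mult_IZR, <- H, mult_IZR. field. exact HP.
Qed.

Lemma w_WL (k : nat) : (k <= 26)%nat -> w k * IZR WL = IZR (wZ k).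
Proof.
  intros Hk.
  do 27 (destruct k as [|k]; [unfold w, wZ; cbv [Nat.even]; first [apply w_aux; vm_compute; reflexivity | simpl; ring] |]).
  lia.
Qed.

Lemma B_WL (xs ys : nat -> list Z) (n m : nat) (a : nat -> R) :
  (n + m <= 26)%nat ->
  2 * IZR WL * B (fun i => evL 0 (xs i) a) n (fun j => evL 0 (ys j) a) m =
  evQ 0 (sumQ (fun i => sumQ (fun j => scaleQ (wZ (i + j)) (souter (xs i) (ys j))) m) n) a.
Proof.
  intros Hnm. unfold B. apply sumQ_ev. intros i Hi. apply sumQ_ev. intros j Hj.
  rewrite evQ_scale, evQ_souter. rewrite <- w_WL by lia. ring.
Qed.

Definition unitL (i : nat) : list Z := repeat 0%Z i ++ (1%Z :: nil).

Lemma evL_unit k i a : evL k (unitL i) a = a (k + i)%nat.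
Proof.
  revert k; induction i as [|i IH]; intros k; unfold unitL in *; simpl.
  - rewrite Nat.add_0_r. ring.
  - rewrite IH. replace (S k + i)%nat with (k + S i)%nat by lia. ring.
Qed.

Lemma B_ext X X' Y Y' n m :
  (forall i, (i <= n)%nat -> X i = X' i) -> (forall j, (j <= m)%nat -> Y j = Y' j) ->
  B X n Y m = B X' n Y' m.
Proof.
  intros HX HY. unfold B. apply sum_eq. intros i Hi. apply sum_eq. intros j Hj.
  rewrite HX, HY by lia. reflexivity.
Qed.

Lemma sum_scal_l (c : R) (f : nat -> R) n : sum_f_R0 (fun i => c * f i) n = c * sum_f_R0 f n.
Proof. induction n as [|n IH]; simpl. reflexivity. rewrite IH. ring. Qed.

Lemma B_scal_r X Y n m c : B X n (fun j => c * Y j) m = c * B X n Y m.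
Proof.
  unfold B. rewrite <- sum_scal_l. apply sum_eq. intros i _.
  rewrite <- sum_scal_l. apply sum_eq. intros j _. ring.
Qed.

Lemma B_scal_l X Y n m c : B (fun i => c * X i) n Y m = c * B X n Y m.
Proof.
  unfold B. rewrite <- sum_scal_l. apply sum_eq. intros i _.
  rewrite <- sum_scal_l. apply sum_eq. intros j _. ring.
Qed.

Definition BQ (xs : nat -> list Z) (n : nat) (ys : nat -> list Z) (m : nat) : list (list Z) :=
  sumQ (fun i => sumQ (fun j => scaleQ (wZ (i + j)) (souter (xs i) (ys j))) m) n.

Definition Kmat (N : nat) (dM : Z) (Ms : list (list Z)) : list (list Z) :=
  addQ (addQ (scaleQ (600 * dM) (BQ unitL N (fun j => nth j Ms nil) (N - 1)))
             (scaleQ (-104 * dM * dM) (BQ unitL N unitL N)))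
       (scaleQ (-100) (BQ (fun j => nth j Ms nil) (N - 1) (fun j => nth j Ms nil) (N - 1))).

Fixpoint certQ (cs : list (Z * list Z)) : list (list Z) :=
  match cs with
  | nil => nil
  | (d, l) :: cs' => addQ (scaleQ d (souter l l)) (certQ cs')
  end.

Lemma certQ_nonneg cs a : forallb (fun q => Z.leb 0 (fst q)) cs = true -> 0 <= evQ 0 (certQ cs) a.
Proof.
  induction cs as [|[d l] cs IH]; intros H; simpl in *. lra.
  apply andb_prop in H. destruct H as [H1 H2]. apply Z.leb_le in H1.
  rewrite evQ_add, evQ_scale, evQ_souter.
  apply Rplus_le_le_0_compat; [|exact (IH H2)].
  apply Rmult_le_pos. apply IZR_le. exact H1.
  pose proof (Rle_0_sqr (evL 0 l a)). unfold Rsqr in *. lra.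
Qed.

Lemma final_alg (W d L A X Z Kc : R) : 0 < W -> 0 < d -> 0 < L -> 0 <= Kc ->
  2 * L * (600 * d * (2 * W * X) + -104 * d * d * (2 * W * A) + -100 * (2 * W * Z)) = Kc ->
  3 / 2 * (/ d * X) - / 4 * A - / 4 * (/ d * (/ d * Z)) >= / 100 * A.
Proof.
  intros Wp Dp Lp HKc HK.
  assert (H3 : 0 <= 600 * d * X - 104 * d * d * A - 100 * Z).
  { assert (Hf : 0 < 4 * L * W) by (apply Rmult_lt_0_compat; lra).
    apply (Rmult_le_reg_l _ _ _ Hf). rewrite Rmult_0_r.
    replace (4 * L * W * (600 * d * X - 104 * d * d * A - 100 * Z))
      with (2 * L * (600 * d * (2 * W * X) + -104 * d * d * (2 * W * A) + -100 * (2 * W * Z))) by ring.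
    lra. }
  apply Rminus_ge.
  replace (3 / 2 * (/ d * X) - / 4 * A - / 4 * (/ d * (/ d * Z)) - / 100 * A)
    with ((600 * d * X - 104 * d * d * A - 100 * Z) / (400 * d * d)) by (field; lra).
  apply Rle_ge. apply Rdiv_le_0_compat. exact H3.
  apply Rmult_lt_0_compat; [|exact Dp]. apply Rmult_lt_0_compat; lra.
Qed.

Lemma keyquad N dM Lam Ms cs g nu a :
  (0 < dM)%Z -> (0 < Lam)%Z -> (N + N <= 26)%nat ->
  forallb (fun q => Z.leb 0 (fst q)) cs = true ->
  eqQ (scaleQ (2 * Lam) (Kmat N dM Ms)) (addQ (certQ cs) (souter g nu)) = true ->
  evL 0 g a = 0 ->
  3 / 2 * B a N (fun j => / IZR dM * evL 0 (nth j Ms nil) a) (N - 1)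
  - / 4 * B a N a N
  - / 4 * B (fun j => / IZR dM * evL 0 (nth j Ms nil) a) (N - 1)
            (fun j => / IZR dM * evL 0 (nth j Ms nil) a) (N - 1)
  >= / 100 * B a N a N.
Proof.
  intros HdM HL HN Hcs Heq Hg.
  assert (Ea : B a N a N = B (fun i => evL 0 (unitL i) a) N (fun i => evL 0 (unitL i) a) N).
  { apply B_ext; intros; rewrite evL_unit; reflexivity. }
  assert (Eab : B a N (fun j => / IZR dM * evL 0 (nth j Ms nil) a) (N - 1) =
     / IZR dM * B (fun i => evL 0 (unitL i) a) N (fun j => evL 0 (nth j Ms nil) a) (N - 1)).
  { rewrite B_scal_r. f_equal. apply B_ext; intros; [rewrite evL_unit|]; reflexivity. }
  assert (Ebb : B (fun j => / IZR dM * evL 0 (nth j Ms nil) a) (N - 1)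
                  (fun j => / IZR dM * evL 0 (nth j Ms nil) a) (N - 1)
               = / IZR dM * (/ IZR dM * B (fun j => evL 0 (nth j Ms nil) a) (N - 1)
                                         (fun j => evL 0 (nth j Ms nil) a) (N - 1))).
  { rewrite B_scal_l, B_scal_r. reflexivity. }
  rewrite Eab, Ebb, Ea.
  pose proof (B_WL unitL unitL N N a HN) as HA.
  pose proof (B_WL unitL (fun j => nth j Ms nil) N (N - 1) a ltac:(lia)) as HX.
  pose proof (B_WL (fun j => nth j Ms nil) (fun j => nth j Ms nil) (N - 1) (N - 1) a ltac:(lia)) as HZ.
  pose proof (eqQ_ev _ _ a Heq) as HK.
  rewrite evQ_scale, evQ_add, evQ_souter, Hg in HK.
  unfold Kmat in HK. rewrite !evQ_add, !evQ_scale in HK. unfold BQ in HK.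
  pose proof (certQ_nonneg cs a Hcs) as Hc.
  apply (final_alg (IZR WL) (IZR dM) (IZR Lam) _ _ _ (evQ 0 (certQ cs) a)).
  - apply IZR_lt; reflexivity.
  - apply IZR_lt; exact HdM.
  - apply IZR_lt; exact HL.
  - exact Hc.
  - rewrite HA, HX, HZ. rewrite !mult_IZR in HK. lra.
Qed.

Fixpoint sumL (f : nat -> list Z) (n : nat) : list Z :=
  match n with O => f O | S n' => addL (sumL f n') (f (S n')) end.

Lemma sumL_ev f n a : sum_f_R0 (fun j => evL 0 (f j) a) n = evL 0 (sumL f n) a.
Proof. induction n as [|n IH]; simpl. reflexivity. rewrite evL_add, IH. reflexivity. Qed.

Lemma evL_ones k n a : evL k (repeat 1%Z (S n)) a = sum_f_R0 (fun i => a (k + i)%nat) n.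
Proof.
  revert k; induction n as [|n IH]; intros k.
  - simpl. rewrite Nat.add_0_r. ring.
  - change (evL k (repeat 1%Z (S (S n))) a) with (IZR 1 * a k + evL (S k) (repeat 1%Z (S n)) a).
    rewrite IH. rewrite (decomp_sum (fun i => a (k + i)%nat) (S n)) by lia.
    simpl Nat.pred. rewrite Nat.add_0_r.
    replace (sum_f_R0 (fun i => a (S k + i)%nat) n) with (sum_f_R0 (fun i => a (k + S i)%nat) n).
    ring. apply sum_eq. intros i _. f_equal. lia.
Qed.

Lemma sum_part N dM Ms a :
  (0 < dM)%Z ->
  forallb (Z.eqb 0) (addL (sumL (fun j => nth j Ms nil) (N - 1)) (scaleL (- dM) (repeat 1%Z (S N)))) = true ->
  sum_f_R0 (fun j => / IZR dM * evL 0 (nth j Ms nil) a) (N - 1) = sum_f_R0 a N.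
Proof.
  intros Hd H. pose proof (evL_zero 0 _ a H) as H0.
  rewrite evL_add, evL_scale, evL_ones, <- sumL_ev in H0.
  rewrite sum_scal_l.
  assert (Dp : 0 < IZR dM) by (apply IZR_lt; exact Hd).
  rewrite opp_IZR in H0.
  assert (E : sum_f_R0 (fun j => evL 0 (nth j Ms nil) a) (N - 1) = IZR dM * sum_f_R0 a N).
  { rewrite (sum_eq (fun i => a (0 + i)%nat) a) in H0 by (intros; reflexivity). lra. }
  rewrite E. field. lra.
Qed.

Definition Ms1 : list (list Z) := (((1)%Z::(1)%Z::nil)::nil).
Definition cs1 : list (Z * list Z) := (((13278487622400)%Z, ((0)%Z::(1)%Z::nil))::nil).
Definition g1 : list Z := ((1)%Z::(-1)%Z::nil).
Definition nu1 : list Z := ((7951029886800)%Z::(15982373206800)%Z::nil).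
Lemma key1 : KeyP 1.
Proof.
  intros a Ha. exists (fun j => / IZR 1 * evL 0 (nth j Ms1 nil) a). split.
  - apply sum_part. reflexivity. vm_compute. reflexivity.
  - apply (keyquad 1 1 1 Ms1 cs1 g1 nu1 a).
    + reflexivity.
    + reflexivity.
    + lia.
    + vm_compute. reflexivity.
    + vm_compute. reflexivity.
    + cbv [evL g1]. cbv [sum_f_R0 pow] in Ha. lra.
Qed.

Definition Ms2 : list (list Z) := (((5)%Z::(-1)%Z::(2)%Z::nil)::((-3)%Z::(3)%Z::(0)%Z::nil)::nil).
Definition cs2 : list (Z * list Z) := (((3059559360)%Z, ((0)%Z::(1240)%Z::(-917)%Z::nil))::((2253549042201600)%Z, ((0)%Z::(1)%Z::(0)%Z::nil))::nil).
Definition g2 : list Z := ((1)%Z::(-1)%Z::(1)%Z::nil).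
Definition nu2 : list Z := ((7322657585443200)%Z::(5218445635603200)%Z::(-1739481878534400)%Z::nil).
Lemma key2 : KeyP 2.
Proof.
  intros a Ha. exists (fun j => / IZR 2 * evL 0 (nth j Ms2 nil) a). split.
  - apply sum_part. reflexivity. vm_compute. reflexivity.
  - apply (keyquad 2 2 131 Ms2 cs2 g2 nu2 a).
    + reflexivity.
    + reflexivity.
    + lia.
    + vm_compute. reflexivity.
    + vm_compute. reflexivity.
    + cbv [evL g2]. cbv [sum_f_R0 pow] in Ha. lra.
Qed.

Definition Ms3 : list (list Z) := (((50)%Z::(5)%Z::(5)%Z::(2)%Z::nil)::((-10)%Z::(35)%Z::(-10)%Z::(23)%Z::nil)::((-25)%Z::(-25)%Z::(20)%Z::(-10)%Z::nil)::nil).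
Definition cs3 : list (Z * list Z) := (((139800589253325)%Z, ((0)%Z::(59185)%Z::(-41790)%Z::(59767)%Z::nil))::((2151252675)%Z, ((0)%Z::(6823495)%Z::(-579090)%Z::(4094097)%Z::nil))::((38550303933555338496000)%Z, ((0)%Z::(0)%Z::(1)%Z::(0)%Z::nil))::nil).
Definition g3 : list Z := ((1)%Z::(-1)%Z::(1)%Z::(-1)%Z::nil).
Definition nu3 : list Z := ((501741295137455553180000)%Z::(442398741011204157180000)%Z::(-206808801129986115060000)%Z::(478004273486954994780000)%Z::nil).
Lemma key3 : KeyP 3.
Proof.
  intros a Ha. exists (fun j => / IZR 15 * evL 0 (nth j Ms3 nil) a). split.
  - apply sum_part. reflexivity. vm_compute. reflexivity.
  - apply (keyquad 3 15 147777406 Ms3 cs3 g3 nu3 a).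
    + reflexivity.
    + reflexivity.
    + lia.
    + vm_compute. reflexivity.
    + vm_compute. reflexivity.
    + cbv [evL g3]. cbv [sum_f_R0 pow] in Ha. lra.
Qed.

Definition Ms4 : list (list Z) := (((357)%Z::(21)%Z::(21)%Z::(21)%Z::(-15)%Z::nil)::((105)%Z::(441)%Z::(105)%Z::(105)%Z::(69)%Z::nil)::((-105)%Z::(-105)%Z::(231)%Z::(-105)%Z::(219)%Z::nil)::((-245)%Z::(-245)%Z::(-245)%Z::(91)%Z::(-161)%Z::nil)::nil).
Definition cs4 : list (Z * list Z) := (((2020404483533230080)%Z, ((0)%Z::(45423)%Z::(-33432)%Z::(45423)%Z::(-39142)%Z::nil))::((244177313402880)%Z, ((0)%Z::(2432654)%Z::(-51541)%Z::(1389297)%Z::(-44178)%Z::nil))::((294807519784960)%Z, ((0)%Z::(0)%Z::(864171)%Z::(-51541)%Z::(740718)%Z::nil))::((87551465628044171195187200)%Z, ((0)%Z::(0)%Z::(0)%Z::(1)%Z::(0)%Z::nil))::nil).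
Definition g4 : list Z := ((1)%Z::(-1)%Z::(1)%Z::(-1)%Z::(1)%Z::nil).
Definition nu4 : list Z := ((4502162454029731771485004800)%Z::(4210193423288504030143564800)%Z::(-1695366838504062418055961600)%Z::(4210193423288504030143564800)%Z::(-2834769029328114601789946880)%Z::nil).
Lemma key4 : KeyP 4.
Proof.
  intros a Ha. exists (fun j => / IZR 112 * evL 0 (nth j Ms4 nil) a). split.
  - apply sum_part. reflexivity. vm_compute. reflexivity.
  - apply (keyquad 4 112 23184756469 Ms4 cs4 g4 nu4 a).
    + reflexivity.
    + reflexivity.
    + lia.
    + vm_compute. reflexivity.
    + vm_compute. reflexivity.
    + cbv [evL g4]. cbv [sum_f_R0 pow] in Ha. lra.
Qed.

Definition Ms5 : list (list Z) := (((399)%Z::(-21)%Z::(-21)%Z::(-21)%Z::(-21)%Z::(-17)%Z::nil)::((84)%Z::(504)%Z::(84)%Z::(84)%Z::(84)%Z::(-32)%Z::nil)::((294)%Z::(294)%Z::(714)%Z::(294)%Z::(294)%Z::(238)%Z::nil)::((-196)%Z::(-196)%Z::(-196)%Z::(224)%Z::(-196)%Z::(308)%Z::nil)::((-441)%Z::(-441)%Z::(-441)%Z::(-441)%Z::(-21)%Z::(-357)%Z::nil)::nil).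
Definition cs5 : list (Z * list Z) := (((4391499398678375765600)%Z, ((0)%Z::(96525)%Z::(-65670)%Z::(96525)%Z::(-78804)%Z::(96565)%Z::nil))::((75007153873360800)%Z, ((0)%Z::(12420485)%Z::(-97510)%Z::(6425013)%Z::(-117012)%Z::(4181645)%Z::nil))::((73370701188304000)%Z, ((0)%Z::(0)%Z::(6810216)%Z::(-87759)%Z::(5617188)%Z::(-97510)%Z::nil))::((863012111139799420800)%Z, ((0)%Z::(0)%Z::(0)%Z::(23949)%Z::(-796)%Z::(26610)%Z::nil))::((201363782958125876111238758400)%Z, ((0)%Z::(0)%Z::(0)%Z::(0)%Z::(1)%Z::(0)%Z::nil))::nil).
Definition g5 : list Z := ((1)%Z::(-1)%Z::(1)%Z::(-1)%Z::(1)%Z::(-1)%Z::nil).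
Definition nu5 : list Z := ((41049457190657542579806453600000)%Z::(39365376895656207499609265760000)%Z::(-14805872593553404246733609760000)%Z::(39365376895656207499609265760000)%Z::(-25976938550395593612041622432000)%Z::(39686154094704080848218253920000)%Z::nil).
Lemma key5 : KeyP 5.
Proof.
  intros a Ha. exists (fun j => / IZR 140 * evL 0 (nth j Ms5 nil) a). split.
  - apply sum_part. reflexivity. vm_compute. reflexivity.
  - apply (keyquad 5 140 133729907636859 Ms5 cs5 g5 nu5 a).
    + reflexivity.
    + reflexivity.
    + lia.
    + vm_compute. reflexivity.
    + vm_compute. reflexivity.
    + cbv [evL g5]. cbv [sum_f_R0 pow] in Ha. lra.
Qed.

Definition Ms6 : list (list Z) := (((1529)%Z::(-55)%Z::(-55)%Z::(-55)%Z::(-55)%Z::(-55)%Z::(-15)%Z::nil)::((-385)%Z::(1199)%Z::(-385)%Z::(-385)%Z::(-385)%Z::(-385)%Z::(-345)%Z::nil)::((770)%Z::(770)%Z::(2354)%Z::(770)%Z::(770)%Z::(770)%Z::(-30)%Z::nil)::((2310)%Z::(2310)%Z::(2310)%Z::(3894)%Z::(2310)%Z::(2310)%Z::(2070)%Z::nil)::((-1155)%Z::(-1155)%Z::(-1155)%Z::(-1155)%Z::(429)%Z::(-1155)%Z::(1125)%Z::nil)::((-2541)%Z::(-2541)%Z::(-2541)%Z::(-2541)%Z::(-2541)%Z::(-957)%Z::(-2277)%Z::nil)::nil).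
Definition cs6 : list (Z * list Z) := (((1605392900229753598683765178957824)%Z, ((0)%Z::(1430)%Z::(-995)%Z::(1430)%Z::(-1194)%Z::(1430)%Z::(-1275)%Z::nil))::((7590084117026554418107392)%Z, ((0)%Z::(12017720)%Z::(-10945)%Z::(7007099)%Z::(-13134)%Z::(4859690)%Z::(-12935)%Z::nil))::((343347387952854202076160)%Z, ((0)%Z::(0)%Z::(26372731)%Z::(-45969)%Z::(20110266)%Z::(-65670)%Z::(15435485)%Z::nil))::((1209886247282117538152448)%Z, ((0)%Z::(0)%Z::(0)%Z::(7639401)%Z::(-19701)%Z::(8222335)%Z::(-26865)%Z::nil))::((381056498140372584431616)%Z, ((0)%Z::(0)%Z::(0)%Z::(0)%Z::(5126671)%Z::(-32835)%Z::(6990915)%Z::nil))::((4158781281021633043851277261760102400)%Z, ((0)%Z::(0)%Z::(0)%Z::(0)%Z::(0)%Z::(1)%Z::(0)%Z::nil))::nil).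
Definition g6 : list Z := ((1)%Z::(-1)%Z::(1)%Z::(-1)%Z::(1)%Z::(-1)%Z::(1)%Z::nil).
Definition nu6 : list Z := ((3379999228996536444648795094543986892800)%Z::(3284302761584403476227255029579547852800)%Z::(-1190464054606934127163958408157621657600)%Z::(3284302761584403476227255029579547852800)%Z::(-2104556711327628241526509108697943367680)%Z::(3284302761584403476227255029579547852800)%Z::(-2486368216944327488625104596985152512000)%Z::nil).
Lemma key6 : KeyP 6.
Proof.
  intros a Ha. exists (fun j => / IZR 528 * evL 0 (nth j Ms6 nil) a). split.
  - apply sum_part. reflexivity. vm_compute. reflexivity.
  - apply (keyquad 6 528 769329480893156587369 Ms6 cs6 g6 nu6 a).
    + reflexivity.
    + reflexivity.
    + lia.
    + vm_compute. reflexivity.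
    + vm_compute. reflexivity.
    + cbv [evL g6]. cbv [sum_f_R0 pow] in Ha. lra.
Qed.

Definition Ms7 : list (list Z) := (((24739)%Z::(715)%Z::(715)%Z::(715)%Z::(715)%Z::(715)%Z::(715)%Z::(675)%Z::nil)::((-4290)%Z::(19734)%Z::(-4290)%Z::(-4290)%Z::(-4290)%Z::(-4290)%Z::(-4290)%Z::(-2090)%Z::nil)::((-19305)%Z::(-19305)%Z::(4719)%Z::(-19305)%Z::(-19305)%Z::(-19305)%Z::(-19305)%Z::(-18225)%Z::nil)::((25740)%Z::(25740)%Z::(25740)%Z::(49764)%Z::(25740)%Z::(25740)%Z::(25740)%Z::(6660)%Z::nil)::((70785)%Z::(70785)%Z::(70785)%Z::(70785)%Z::(94809)%Z::(70785)%Z::(70785)%Z::(66825)%Z::nil)::((-28314)%Z::(-28314)%Z::(-28314)%Z::(-28314)%Z::(-28314)%Z::(-4290)%Z::(-28314)%Z::(12078)%Z::nil)::((-61347)%Z::(-61347)%Z::(-61347)%Z::(-61347)%Z::(-61347)%Z::(-61347)%Z::(-37323)%Z::(-57915)%Z::nil)::nil).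
Definition cs7 : list (Z * list Z) := (((5351177463126897647222155702756774622080)%Z, ((0)%Z::(62104185)%Z::(-41831790)%Z::(62104185)%Z::(-50198148)%Z::(62104185)%Z::(-53783730)%Z::(62101801)%Z::nil))::((41108622788324367906531999633536)%Z, ((0)%Z::(390905479965)%Z::(890419530)%Z::(218061304461)%Z::(1068503436)%Z::(143985229245)%Z::(1144825110)%Z::(104368635805)%Z::nil))::((2891409498978166566408402247293440)%Z, ((0)%Z::(0)%Z::(24574125576)%Z::(89041953)%Z::(20553968292)%Z::(127202790)%Z::(16703666980)%Z::(140100975)%Z::nil))::((5693379824200676942856239020086784)%Z, ((0)%Z::(0)%Z::(0)%Z::(7940926851)%Z::(50881116)%Z::(8000762770)%Z::(84801860)%Z::(7093558605)%Z::nil))::((484258775314978227455305248500090880)%Z, ((0)%Z::(0)%Z::(0)%Z::(0)%Z::(471698656)%Z::(4240093)%Z::(625741662)%Z::(6849381)%Z::nil))::((12275642192344345890357772079104686080)%Z, ((0)%Z::(0)%Z::(0)%Z::(0)%Z::(0)%Z::(34806629)%Z::(770926)%Z::(56226093)%Z::nil))::((6322102739225648756267293675840954312327250418073600)%Z, ((0)%Z::(0)%Z::(0)%Z::(0)%Z::(0)%Z::(0)%Z::(1)%Z::(0)%Z::nil))::nil).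
Definition g7 : list Z := ((1)%Z::(-1)%Z::(1)%Z::(-1)%Z::(1)%Z::(-1)%Z::(1)%Z::(-1)%Z::nil).
Definition nu7 : list Z := ((20617872894409049794637543814715220202188584655602867200)%Z::(20190603743141636059384460324616469394972988662325427200)%Z::(-7157470398981292421714570264970907272206592214052582400)%Z::(20190603743141636059384460324616469394972988662325427200)%Z::(-12712539057659360864984993080908132767085627587983672320)%Z::(20190603743141636059384460324616469394972988662325427200)%Z::(-15093282768521390197815174287738372264890928462525568000)%Z::(20214506912443309555062954505880735174397637389222067200)%Z::nil).
Lemma key7 : KeyP 7.
Proof.
  intros a Ha. exists (fun j => / IZR 8008 * evL 0 (nth j Ms7 nil) a). split.
  - apply sum_part. reflexivity. vm_compute. reflexivity.
  - apply (keyquad 7 8008 20325034998515611619677205920748011 Ms7 cs7 g7 nu7 a).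
    + reflexivity.
    + reflexivity.
    + lia.
    + vm_compute. reflexivity.
    + vm_compute. reflexivity.
    + cbv [evL g7]. cbv [sum_f_R0 pow] in Ha. lra.
Qed.

Definition Ms8 : list (list Z) := (((1123265)%Z::(25025)%Z::(25025)%Z::(25025)%Z::(25025)%Z::(25025)%Z::(25025)%Z::(25025)%Z::(18305)%Z::nil)::((225225)%Z::(1323465)%Z::(225225)%Z::(225225)%Z::(225225)%Z::(225225)%Z::(225225)%Z::(225225)%Z::(218505)%Z::nil)::((-675675)%Z::(-675675)%Z::(422565)%Z::(-675675)%Z::(-675675)%Z::(-675675)%Z::(-675675)%Z::(-675675)%Z::(-440475)%Z::nil)::((-2477475)%Z::(-2477475)%Z::(-2477475)%Z::(-1379235)%Z::(-2477475)%Z::(-2477475)%Z::(-2477475)%Z::(-2477475)%Z::(-2403555)%Z::nil)::((2477475)%Z::(2477475)%Z::(2477475)%Z::(2477475)%Z::(3575715)%Z::(2477475)%Z::(2477475)%Z::(2477475)%Z::(1220835)%Z::nil)::((6441435)%Z::(6441435)%Z::(6441435)%Z::(6441435)%Z::(6441435)%Z::(7539675)%Z::(6441435)%Z::(6441435)%Z::(6249243)%Z::nil)::((-2147145)%Z::(-2147145)%Z::(-2147145)%Z::(-2147145)%Z::(-2147145)%Z::(-2147145)%Z::(-1048905)%Z::(-2147145)%Z::(-33033)%Z::nil)::((-4601025)%Z::(-4601025)%Z::(-4601025)%Z::(-4601025)%Z::(-4601025)%Z::(-4601025)%Z::(-4601025)%Z::(-3502785)%Z::(-4463745)%Z::ni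l)::nil).
Definition cs8 : list (Z * list Z) := (((315878167515063384906733985499336148115537605427200)%Z, ((0)%Z::(72144345)%Z::(-49256480)%Z::(72144345)%Z::(-59107776)%Z::(72144345)%Z::(-63329760)%Z::(72144345)%Z::(-65638048)%Z::nil))::((52239891745603498665866958535120857124044800)%Z, ((0)%Z::(102046054110)%Z::(387442055)%Z::(60010483533)%Z::(464930466)%Z::(41995239000)%Z::(498139785)%Z::(31986769815)%Z::(505029364)%Z::nil))::((103073523359481541139498973169224443756544000)%Z, ((0)%Z::(0)%Z::(35507561089)%Z::(232465233)%Z::(28614185886)%Z::(332093190)%Z::(22327766175)%Z::(387442055)%Z::(17815749196)%Z::nil))::((317011589442306258545519768935372337827020800)%Z, ((0)%Z::(0)%Z::(0)%Z::(10617399936)%Z::(99627957)%Z::(11544493675)%Z::(166046595)%Z::(10778609205)%Z::(202661998)%Z::nil))::((599812096280358766486113150389459409685708800)%Z, ((0)%Z::(0)%Z::(0)%Z::(0)%Z::(3446888159)%Z::(55348865)%Z::(4314860745)%Z::(105666015)%Z::(4342373322)%Z::nil))::((4554297761774942611787197640458315653500108800)%Z, ((0)%Z::(0)%Z::(0)%Z::(0)%Z::(0)%Z::(690536990)%Z::(15095145)%Z::(1088213175)%Z::(28177604)%Z::nil))::((118104221818259654586660148597301322053792563200)%Z, ((0)%Z::(0)%Z::(0)%Z::(0)%Z::(0)%Z::(0)%Z::(49432245)%Z::(2709385)%Z::(92273524)%Z::nil))::((126409292700971400301647438685253919947446228356819811565568000)%Z, ((0)%Z::(0)%Z::(0)%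Z::(0)%Z::(0)%Z::(0)%Z::(0)%Z::(1)%Z::(0)%Z::nil))::nil).
Definition g8 : list Z := ((1)%Z::(-1)%Z::(1)%Z::(-1)%Z::(1)%Z::(-1)%Z::(1)%Z::(-1)%Z::(1)%Z::nil).
Definition nu8 : list Z := ((1667451694791500572944521578418424851585552473946626622556241920000)%Z::(1641059613519080494233782078918291504773498778569187138185297920000)%Z::(-573411952445446910122000192472897181736553288233835197099376640000)%Z::(1641059613519080494233782078918291504773498778569187138185297920000)%Z::(-1021584681892836406735304546651161588400974440669927561030500352000)%Z::(1641059613519080494233782078918291504773498778569187138185297920000)%Z::(-1213658708798860476712434984156132048400012077428252859858124800000)%Z::(1641059613519080494233782078918291504773498778569187138185297920000)%Z::(-1319579045486464423108049487680023857554424702431911688499855360000)%Z::nil).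
Lemma key8 : KeyP 8.
Proof.
  intros a Ha. exists (fun j => / IZR 366080 * evL 0 (nth j Ms8 nil) a). split.
  - apply sum_part. reflexivity. vm_compute. reflexivity.
  - apply (keyquad 8 366080 784663446264517004051413149294994132857621 Ms8 cs8 g8 nu8 a).
    + reflexivity.
    + reflexivity.
    + lia.
    + vm_compute. reflexivity.
    + vm_compute. reflexivity.
    + cbv [evL g8]. cbv [sum_f_R0 pow] in Ha. lra.
Qed.

Definition Ms9 : list (list Z) := (((4115683)%Z::(-85085)%Z::(-85085)%Z::(-85085)%Z::(-85085)%Z::(-85085)%Z::(-85085)%Z::(-85085)%Z::(-85085)%Z::(-83741)%Z::nil)::((680680)%Z::(4881448)%Z::(680680)%Z::(680680)%Z::(680680)%Z::(680680)%Z::(680680)%Z::(680680)%Z::(680680)%Z::(561064)%Z::nil)::((3743740)%Z::(3743740)%Z::(7944508)%Z::(3743740)%Z::(3743740)%Z::(3743740)%Z::(3743740)%Z::(3743740)%Z::(3743740)%Z::(3684604)%Z::nil)::((-7487480)%Z::(-7487480)%Z::(-7487480)%Z::(-3286712)%Z::(-7487480)%Z::(-7487480)%Z::(-7487480)%Z::(-7487480)%Z::(-7487480)%Z::(-5772536)%Z::nil)::((-24334310)%Z::(-24334310)%Z::(-24334310)%Z::(-24334310)%Z::(-20133542)%Z::(-24334310)%Z::(-24334310)%Z::(-24334310)%Z::(-24334310)%Z::(-23949926)%Z::nil)::((19467448)%Z::(19467448)%Z::(19467448)%Z::(19467448)%Z::(19467448)%Z::(23668216)%Z::(19467448)%Z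::(19467448)%Z::(19467448)%Z::(12932920)%Z::nil)::((48668620)%Z::(48668620)%Z::(48668620)%Z::(48668620)%Z::(48668620)%Z::(48668620)%Z::(52869388)%Z::(48668620)%Z::(48668620)%Z::(47899852)%Z::nil)::((-13905320)%Z::(-13905320)%Z::(-13905320)%Z::(-13905320)%Z::(-13905320)%Z::(-13905320)%Z::(-13905320)%Z::(-9704552)%Z::(-13905320)%Z::(-4789928)%Z::nil)::((-29548805)%Z::(-29548805)%Z::(-29548805)%Z::(-29548805)%Z::(-29548805)%Z::(-29548805)%Z::(-29548805)%Z::(-29548805)%Z::(-25348037)%Z::(-29082053)%Z::nil)::nil).
Definition cs9 : list (Z * list Z) := (((1228870521339650389666480100296781868292869958656)%Z, ((0)%Z::(25896555685)%Z::(-17372144790)%Z::(25896555685)%Z::(-20846573748)%Z::(25896555685)%Z::(-22335614730)%Z::(25896555685)%Z::(-23162859720)%Z::(25895945509)%Z::nil))::((1236374162897373701352882064555838942966784)%Z, ((0)%Z::(14461232851065)%Z::(69183804690)%Z::(8290972114425)%Z::(83020565628)%Z::(5646574655865)%Z::(88950606030)%Z::(4177464956665)%Z::(92245072920)%Z::(3252732921081)%Z::nil))::((82648504624993932388008269000305206702489600)%Z, ((0)%Z::(0)%Z::(923035569456)%Z::(6918380469)%Z::(777100218180)%Z::(9883400670)%Z::(635855909260)%Z::(11530634115)%Z::(529563408920)%Z::(12396736044)%Z::nil))::((143160471989861476807762765043746602937761792)%Z, ((0)%Z::(0)%Z::(0)%Z::(333946725255)%Z::(3953360268)%Z::(351483679690)%Z::(6588933780)%Z::(316828376865)%Z::(8385915720)%Z::(276837791076)%Z::nil))::((3794068639502001908981968282587989653565472768)%Z,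 ((0)%Z::(0)%Z::(0)%Z::(0)%Z::(34117840328)%Z::(549077815)%Z::(45619069730)%Z::(1048239465)%Z::(48153335720)%Z::(1405874106)%Z::nil))::((177828284691203079995585415473097756967737753600)%Z, ((0)%Z::(0)%Z::(0)%Z::(0)%Z::(0)%Z::(2199057185)%Z::(59899398)%Z::(3287234223)%Z::(129014088)%Z::(3701422998)%Z::nil))::((1360594573492062097774256655360826211023296921600)%Z, ((0)%Z::(0)%Z::(0)%Z::(0)%Z::(0)%Z::(0)%Z::(442231336)%Z::(16126761)%Z::(806761928)%Z::(34150788)%Z::nil))::((900451078261060422231309051318772694257709875200)%Z, ((0)%Z::(0)%Z::(0)%Z::(0)%Z::(0)%Z::(0)%Z::(0)%Z::(192683491)%Z::(18430584)%Z::(408035628)%Z::nil))::((15236126810188723268881752174471800608674958186406897120182272000)%Z, ((0)%Z::(0)%Z::(0)%Z::(0)%Z::(0)%Z::(0)%Z::(0)%Z::(0)%Z::(1)%Z::(0)%Z::nil))::nil).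
Definition g9 : list Z := ((1)%Z::(-1)%Z::(1)%Z::(-1)%Z::(1)%Z::(-1)%Z::(1)%Z::(-1)%Z::(1)%Z::(-1)%Z::nil).
Definition nu9 : list Z := ((822275453223561803653544783570708061762201092120665319033421815808000)%Z::(812009201232506659092042258025159549848071607232461744290511249408000)%Z::(-280935985735224030925516611553935028530153353965690822839747649536000)%Z::(812009201232506659092042258025159549848071607232461744290511249408000)%Z::(-501578273526981197841328890578863646588624243182962051214381542604800)%Z::(812009201232506659092042258025159549848071607232461744290511249408000)%Z::(-596139254009162840805248438732404482899397481418935434803510353920000)%Z::(812009201232506659092042258025159549848071607232461744290511249408000)%Z::(-648673132054819309118537076595482725294271502661142870130804137984000)%Z::(812171366628005020898361343578820209188878917894620122435360186368000)%Z::nil).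
Lemma key9 : KeyP 9.
Proof.
  intros a Ha. exists (fun j => / IZR 1400256 * evL 0 (nth j Ms9 nil) a). split.
  - apply sum_part. reflexivity. vm_compute. reflexivity.
  - apply (keyquad 9 1400256 26403643932992733924908995245526228099545335 Ms9 cs9 g9 nu9 a).
    + reflexivity.
    + reflexivity.
    + lia.
    + vm_compute. reflexivity.
    + vm_compute. reflexivity.
    + cbv [evL g9]. cbv [sum_f_R0 pow] in Ha. lra.
Qed.

Definition Ms10 : list (list Z) := (((15859623)%Z::(-264537)%Z::(-264537)%Z::(-264537)%Z::(-264537)%Z::(-264537)%Z::(-264537)%Z::(-264537)%Z::(-264537)%Z::(-264537)%Z::(-240345)%Z::nil)::((-2909907)%Z::(13214253)%Z::(-2909907)%Z::(-2909907)%Z::(-2909907)%Z::(-2909907)%Z::(-2909907)%Z::(-2909907)%Z::(-2909907)%Z::(-2909907)%Z::(-2885715)%Z::nil)::((11639628)%Z::(11639628)%Z::(27763788)%Z::(11639628)%Z::(11639628)%Z::(11639628)%Z::(11639628)%Z::(11639628)%Z::(11639628)%Z::(11639628)%Z::(10333260)%Z::nil)::((50438388)%Z::(50438388)%Z::(50438388)%Z::(66562548)%Z::(50438388)%Z::(50438388)%Z::(50438388)%Z::(50438388)%Z::(50438388)%Z::(50438388)%Z::(50019060)%Z::nil)::((-75657582)%Z::(-75657582)%Z::(-75657582)%Z::(-75657582)%Z::(-59533422)%Z::(-75657582)%Z::(-75657582)%Z::(-75657582)%Z::(-75657582)%Z::(-75657582)%Z::(-64545390)%Z::nil)::((-2269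72746)%Z::(-226972746)%Z::(-226972746)%Z::(-226972746)%Z::(-226972746)%Z::(-210848586)%Z::(-226972746)%Z::(-226972746)%Z::(-226972746)%Z::(-226972746)%Z::(-225085770)%Z::nil)::((151315164)%Z::(151315164)%Z::(151315164)%Z::(151315164)%Z::(151315164)%Z::(151315164)%Z::(167439324)%Z::(151315164)%Z::(151315164)%Z::(151315164)%Z::(118607580)%Z::nil)::((367479684)%Z::(367479684)%Z::(367479684)%Z::(367479684)%Z::(367479684)%Z::(367479684)%Z::(367479684)%Z::(383603844)%Z::(367479684)%Z::(367479684)%Z::(364424580)%Z::nil)::((-91869921)%Z::(-91869921)%Z::(-91869921)%Z::(-91869921)%Z::(-91869921)%Z::(-91869921)%Z::(-91869921)%Z::(-91869921)%Z::(-75745761)%Z::(-91869921)%Z::(-52917345)%Z::nil)::((-193947611)%Z::(-193947611)%Z::(-193947611)%Z::(-193947611)%Z::(-193947611)%Z::(-193947611)%Z::(-193947611)%Z::(-193947611)%Z::(-193947611)%Z::(-177823451)%Z::(-192335195)%Z::nil)::nil).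
Definition cs10 : list (Z * list Z) := (((131426755475312005768618402823372108484197815523737600)%Z, ((0)%Z::(129623130)%Z::(-87738105)%Z::(129623130)%Z::(-105285726)%Z::(129623130)%Z::(-112806135)%Z::(129623130)%Z::(-116984140)%Z::(129623130)%Z::(-119630085)%Z::nil))::((1469203923734461421334427404614777009115234304)%Z, ((0)%Z::(704285673000)%Z::(3597262305)%Z::(416101093317)%Z::(4316714766)%Z::(292593416310)%Z::(4625051535)%Z::(223978040195)%Z::(4796349740)%Z::(180313709940)%Z::(4875451245)%Z::nil))::((204585302077614247179069224475804718819180544)%Z, ((0)%Z::(0)%Z::(940709885115)%Z::(7913977071)%Z::(774696780858)%Z::(11305681530)%Z::(619225669205)%Z::(13189961785)%Z::(503041795620)%Z::(14389049220)%Z::(416739943935)%Z::nil))::((5318427709494512865306331044007720179403325440)%Z, ((0)%Z::(0)%Z::(0)%Z::(95363610771)%Z::(1130568153)%Z::(104236794805)%Z::(1884280255)%Z::(97854293810)%Z::(2398174870)%Z::(88809072870)%Z::(2739710610)%Z::nil))::((975741333507086465656939076555988336535142400)%Z, ((0)%Z::(0)%Z::(0)%Z::(0)%Z::(104642518981)%Z::(1884280255)%Z::(135873446475)%Z::(3597262305)%Z::(138979668030)%Z::(4980824730)%Z::(132179887770)%Z::nil))::((57357253804246160048459041027084811867704524800)%Z, ((0)%Z::(0)%Z::(0)%Z::(0)%Z::(0)%Z::(7210186880)%Z::(171298205)%Z::(11436556285)%Z::(368949980)%Z::(13471065132)%Z::(539717850)%Z::nil))::((1918278067786624221286208217825181925144336033382400)%Z,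 ((0)%Z::(0)%Z::(0)%Z::(0)%Z::(0)%Z::(0)%Z::(17195755)%Z::(693515)%Z::(29851524)%Z::(1664436)%Z::(37161270)%Z::nil))::((18444446192170860888225261017672397239229612032000)%Z, ((0)%Z::(0)%Z::(0)%Z::(0)%Z::(0)%Z::(0)%Z::(0)%Z::(98330567)%Z::(5270714)%Z::(203705802)%Z::(12483270)%Z::nil))::((2215137651272446929838955682192641935927146866278400)%Z, ((0)%Z::(0)%Z::(0)%Z::(0)%Z::(0)%Z::(0)%Z::(0)%Z::(0)%Z::(3046897)%Z::(465063)%Z::(7216335)%Z::nil))::((9880230553340592856988824974978902727163605089267988873137356800)%Z, ((0)%Z::(0)%Z::(0)%Z::(0)%Z::(0)%Z::(0)%Z::(0)%Z::(0)%Z::(0)%Z::(1)%Z::(0)%Z::nil))::nil).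
Definition g10 : list Z := ((1)%Z::(-1)%Z::(1)%Z::(-1)%Z::(1)%Z::(-1)%Z::(1)%Z::(-1)%Z::(1)%Z::(-1)%Z::(1)%Z::nil).
Definition nu10 : list Z := ((2225230732078628354345089670999847253197328791151461208828748759040000)%Z::(2202753653976824027533523108666515462760992136695385843083003822080000)%Z::(-756728296094079002656074265222170278023334033354537313440079544320000)%Z::(2202753653976824027533523108666515462760992136695385843083003822080000)%Z::(-1353120101728620474056307052466573784267466598255737017893845204992000)%Z::(2202753653976824027533523108666515462760992136695385843083003822080000)%Z::(-1608716589857709676084978246999889572657809126070536891231173345280000)%Z::(2202753653976824027533523108666515462760992136695385843083003822080000)%Z::(-1750714638818314788323128910629509455096888308189870154196355645440000)%Z::(2202753653976824027533523108666515462760992136695385843083003822080000)%Z::(-1840890166651954252319325427032320033308243850087777224232278425600000)%Z::nil).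
Lemma key10 : KeyP 10.
Proof.
  intros a Ha. exists (fun j => / IZR 5374720 * evL 0 (nth j Ms10 nil) a). split.
  - apply sum_part. reflexivity. vm_compute. reflexivity.
  - apply (keyquad 10 5374720 4844065189688447048467345302147301742264621 Ms10 cs10 g10 nu10 a).
    + reflexivity.
    + reflexivity.
    + lia.
    + vm_compute. reflexivity.
    + vm_compute. reflexivity.
    + cbv [evL g10]. cbv [sum_f_R0 pow] in Ha. lra.
Qed.

Definition Ms11 : list (list Z) := (((126007791)%Z::(1851759)%Z::(1851759)%Z::(1851759)%Z::(1851759)%Z::(1851759)%Z::(1851759)%Z::(1851759)%Z::(1851759)%Z::(1851759)%Z::(1851759)%Z::(1843695)%Z::nil)::((-18517590)%Z::(105638442)%Z::(-18517590)%Z::(-18517590)%Z::(-18517590)%Z::(-18517590)%Z::(-18517590)%Z::(-18517590)%Z::(-18517590)%Z::(-18517590)%Z::(-18517590)%Z::(-17461206)%Z::nil)::((-120364335)%Z::(-120364335)%Z::(3791697)%Z::(-120364335)%Z::(-120364335)%Z::(-120364335)%Z::(-120364335)%Z::(-120364335)%Z::(-120364335)%Z::(-120364335)%Z::(-120364335)%Z::(-119840175)%Z::nil)::((320971560)%Z::(320971560)%Z::(320971560)%Z::(445127592)%Z::(320971560)%Z::(320971560)%Z::(320971560)%Z::(320971560)%Z::(320971560)%Z::(320971560)%Z::(320971560)%Z::(298432680)%Z::nil)::((1203643350)%Z::(1203643350)%Z::(1203643350)%Z::(1203643350)%Z::(1327799382)%Z::(1203643350)%Z::(1203643350)%Z: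:(1203643350)%Z::(1203643350)%Z::(1203643350)%Z::(1203643350)%Z::(1198401750)%Z::nil)::((-1444372020)%Z::(-1444372020)%Z::(-1444372020)%Z::(-1444372020)%Z::(-1444372020)%Z::(-1320215988)%Z::(-1444372020)%Z::(-1444372020)%Z::(-1444372020)%Z::(-1444372020)%Z::(-1444372020)%Z::(-1311235380)%Z::nil)::((-4092387390)%Z::(-4092387390)%Z::(-4092387390)%Z::(-4092387390)%Z::(-4092387390)%Z::(-4092387390)%Z::(-3968231358)%Z::(-4092387390)%Z::(-4092387390)%Z::(-4092387390)%Z::(-4092387390)%Z::(-4074565950)%Z::nil)::((2338507080)%Z::(2338507080)%Z::(2338507080)%Z::(2338507080)%Z::(2338507080)%Z::(2338507080)%Z::(2338507080)%Z::(2462663112)%Z::(2338507080)%Z::(2338507080)%Z::(2338507080)%Z::(2020267080)%Z::nil)::((5553954315)%Z::(5553954315)%Z::(5553954315)%Z::(5553954315)%Z::(5553954315)%Z::(5553954315)%Z::(5553954315)%Z::(5553954315)%Z::(5678110347)%Z::(5553954315)%Z::(5553954315)%Z::(5529768075)%Z::nil)::((-1234212070)%Z::(-1234212070)%Z::(-1234212070)%Z::(-1234212070)%Z::(-1234212070)%Z::(-1234212070)%Z::(-1234212070)%Z::(-1234212070)%Z::(-1234212070)%Z::(-1110056038)%Z::(-1234212070)%Z::(-903666790)%Z::nil)::((-2591845347)%Z::(-2591845347)%Z::(-2591845347)%Z::(-2591845347)%Z::(-2591845347)%Z::(-2591845347)%Z::(-2591845347)%Z::(-2591845347)%Z::(-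2591845347)%Z::(-2591845347)%Z::(-2467689315)%Z::(-2580558435)%Z::nil)::nil).
Definition cs11 : list (Z * list Z) := (((121206971175327722270758934142574140489144128346889607220125173137408)%Z, ((0)%Z::(729483263145)%Z::(-488350292430)%Z::(729483263145)%Z::(-586020350916)%Z::(729483263145)%Z::(-627878947410)%Z::(729483263145)%Z::(-651133723240)%Z::(729483263145)%Z::(-665932216950)%Z::(729477806505)%Z::nil))::((80006387009121395866445906865053157916184658867790897348755456)%Z, ((0)%Z::(506967232386615)%Z::(2742868638510)%Z::(294603957711063)%Z::(3291442366212)%Z::(203591125707255)%Z::(3526545392370)%Z::(153028441260695)%Z::(3657158184680)%Z::(120852187521975)%Z::(3740275416150)%Z::(98645824581975)%Z::nil))::((578179411697051194755734527889415709193637837877127430556385280)%Z, ((0)%Z::(0)%Z::(97953553265568)%Z::(822860591553)%Z::(82780796555028)%Z::(1175515130790)%Z::(68001170497260)%Z::(1371434319255)%Z::(56864049340280)%Z::(1496110166460)%Z::(48487617549000)%Z::(1576451922045)%Z::nil))::((941915648855917910344258383726313441163272218147467695317549056)%Z, ((0)%Z::(0)%Z::(0)%Z::(37343218560219)%Z::(470206052316)%Z::(40020441036290)%Z::(783676753860)%Z::(36796216232685)%Z::(997406777640)%Z::(32668709894100)%Z::(1150853974200)%Z::(28791029193135)%Z::nil))::((23266131439695719366475339851780172706954684252566234844593389568)%Z, ((0)%Z::(0)%Z::(0)%Z::(0)%Z::(3884661549912)%Z::(65306396155)%Z::(5217088490250)%Z::(124675847205)%Z::(5532058248360)%Z::(172628096130)%Z::(5445713507220)%Z::(209496822150)%Z::nil))::((13640610462109889648656313907189431916992793769019772261523712376832)%Z,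 ((0)%Z::(0)%Z::(0)%Z::(0)%Z::(0)%Z::(74703457595)%Z::(1874824770)%Z::(115320248085)%Z::(4038084120)%Z::(131958816066)%Z::(6057126180)%Z::(135795894630)%Z::nil))::((247013326756379079410754840508482864178143597854633453076250361856)%Z, ((0)%Z::(0)%Z::(0)%Z::(0)%Z::(0)%Z::(0)%Z::(294662783640)%Z::(9590449785)%Z::(540593831176)%Z::(23017079484)%Z::(702993264120)%Z::(36486974370)%Z::nil))::((477559669667257898523014032198261598821111068542578870654347509760)%Z, ((0)%Z::(0)%Z::(0)%Z::(0)%Z::(0)%Z::(0)%Z::(0)%Z::(91226210747)%Z::(5114906552)%Z::(180116750772)%Z::(13539458520)%Z::(245383598790)%Z::nil))::((148225909886742183265257171172505020518482460313197172553375928922669056)%Z, ((0)%Z::(0)%Z::(0)%Z::(0)%Z::(0)%Z::(0)%Z::(0)%Z::(0)%Z::(92623328)%Z::(6907887)%Z::(214664310)%Z::(18092085)%Z::nil))::((956266147711693674322371232808902364137404921661892969814663134038720512)%Z, ((0)%Z::(0)%Z::(0)%Z::(0)%Z::(0)%Z::(0)%Z::(0)%Z::(0)%Z::(0)%Z::(11554683)%Z::(2827790)%Z::(30262265)%Z::nil))::((65563513809820513445212232016420787488687521853387702143750288380463206936211147980800)%Z, ((0)%Z::(0)%Z::(0)%Z::(0)%Z::(0)%Z::(0)%Z::(0)%Z::(0)%Z::(0)%Z::(0)%Z::(1)%Z::(0)%Z::nil))::nil).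
Definition g11 : list Z := ((1)%Z::(-1)%Z::(1)%Z::(-1)%Z::(1)%Z::(-1)%Z::(1)%Z::(-1)%Z::(1)%Z::(-1)%Z::(1)%Z::(-1)%Z::nil).
Definition nu11 : list Z := ((64333598806046359613435450689289686269574336828830325461565373660544587327148158088845721600)%Z::(63797015972683447401804978603804139030160063199164114815069978742820373745871639817951641600)%Z::(-21802254824257394678898798286753593582800961362720915584852054498664338163233731543544627200)%Z::(63797015972683447401804978603804139030160063199164114815069978742820373745871639817951641600)%Z::(-39029425550318145537365648081962249553276021001031163794135540130506123261310109470022696960)%Z::(63797015972683447401804978603804139030160063199164114815069978742820373745871639817951641600)%Z::(-46412498718629895905280012279908816397765332274592698740971319687009745446199985724227584000)%Z::(63797015972683447401804978603804139030160063199164114815069978742820373745871639817951641600)%Z::(-50514206034358646109676881278768020200259394093237995933657863885067313326694361421008076800)%Z::(63797015972683447401804978603804139030160063199164114815069978742820373745871639817951641600)%Z::(-53124383417095123512474888823496604438210160705103185056276573829285765614281691409868390400)%Z::(63799352671988399355096194213879400148339392530113567914881206264661243998598595022887321600)%Z::nil).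
Lemma key11 : KeyP 11.
Proof.
  intros a Ha. exists (fun j => / IZR 41385344 * evL 0 (nth j Ms11 nil) a). split.
  - apply sum_part. reflexivity. vm_compute. reflexivity.
  - apply (keyquad 11 41385344 2359993565131570803289098993947954998813973407712287507940267667 Ms11 cs11 g11 nu11 a).
    + reflexivity.
    + reflexivity.
    + lia.
    + vm_compute. reflexivity.
    + vm_compute. reflexivity.
    + cbv [evL g11]. cbv [sum_f_R0 pow] in Ha. lra.
Qed.

Definition Ms12 : list (list Z) := (((970531989)%Z::(12012693)%Z::(12012693)%Z::(12012693)%Z::(12012693)%Z::(12012693)%Z::(12012693)%Z::(12012693)%Z::(12012693)%Z::(12012693)%Z::(12012693)%Z::(12012693)%Z::(11657877)%Z::nil)::((156165009)%Z::(1114684305)%Z::(156165009)%Z::(156165009)%Z::(156165009)%Z::(156165009)%Z::(156165009)%Z::(156165009)%Z::(156165009)%Z::(156165009)%Z::(156165009)%Z::(156165009)%Z::(155810193)%Z::nil)::((-780825045)%Z::(-780825045)%Z::(177694251)%Z::(-780825045)%Z::(-780825045)%Z::(-780825045)%Z::(-780825045)%Z::(-780825045)%Z::(-780825045)%Z::(-780825045)%Z::(-780825045)%Z::(-780825045)%Z::(-753504213)%Z::nil)::((-3904125225)%Z::(-3904125225)%Z::(-3904125225)%Z::(-2945605929)%Z::(-3904125225)%Z::(-3904125225)%Z::(-3904125225)%Z::(-3904125225)%Z::(-3904125225)%Z::(-3904125225)%Z::(-3904125225)%Z::(-3904125225)%Z::(-3895254825)%Z::nil)::((7808250450)%Z: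:(7808250450)%Z::(7808250450)%Z::(7808250450)%Z::(8766769746)%Z::(7808250450)%Z::(7808250450)%Z::(7808250450)%Z::(7808250450)%Z::(7808250450)%Z::(7808250450)%Z::(7808250450)%Z::(7471175250)%Z::nil)::((26548051530)%Z::(26548051530)%Z::(26548051530)%Z::(26548051530)%Z::(26548051530)%Z::(27506570826)%Z::(26548051530)%Z::(26548051530)%Z::(26548051530)%Z::(26548051530)%Z::(26548051530)%Z::(26548051530)%Z::(26487732810)%Z::nil)::((-26548051530)%Z::(-26548051530)%Z::(-26548051530)%Z::(-26548051530)%Z::(-26548051530)%Z::(-26548051530)%Z::(-25589532234)%Z::(-26548051530)%Z::(-26548051530)%Z::(-26548051530)%Z::(-26548051530)%Z::(-26548051530)%Z::(-25040083530)%Z::nil)::((-72058997010)%Z::(-72058997010)%Z::(-72058997010)%Z::(-72058997010)%Z::(-72058997010)%Z::(-72058997010)%Z::(-72058997010)%Z::(-71100477714)%Z::(-72058997010)%Z::(-72058997010)%Z::(-72058997010)%Z::(-72058997010)%Z::(-71895274770)%Z::nil)::((36029498505)%Z::(36029498505)%Z::(36029498505)%Z::(36029498505)%Z::(36029498505)%Z::(36029498505)%Z::(36029498505)%Z::(36029498505)%Z::(36988017801)%Z::(36029498505)%Z::(36029498505)%Z::(36029498505)%Z::(33000637065)%Z::nil)::((84068829845)%Z::(84068829845)%Z::(84068829845)%Z::(84068829845)%Z::(84068829845)%Z::(84068829845)%Z::(84068829845)%Z::(84068829845)%Z::(84068829845)%Z::(85027349141)%Z::(84068829845)%Z::(8406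8829845)%Z::(83877820565)%Z::nil)::((-16813765969)%Z::(-16813765969)%Z::(-16813765969)%Z::(-16813765969)%Z::(-16813765969)%Z::(-16813765969)%Z::(-16813765969)%Z::(-16813765969)%Z::(-16813765969)%Z::(-16813765969)%Z::(-15855246673)%Z::(-16813765969)%Z::(-14025030481)%Z::nil)::((-35156056117)%Z::(-35156056117)%Z::(-35156056117)%Z::(-35156056117)%Z::(-35156056117)%Z::(-35156056117)%Z::(-35156056117)%Z::(-35156056117)%Z::(-35156056117)%Z::(-35156056117)%Z::(-35156056117)%Z::(-34197536821)%Z::(-35076179509)%Z::nil)::nil).
Definition cs12 : list (Z * list Z) := (((1583790664170022242720483324030178285737533532289183170683829569111180212961280)%Z, ((0)%Z::(101378548425)%Z::(-68300740200)%Z::(101378548425)%Z::(-81960888240)%Z::(101378548425)%Z::(-87815237400)%Z::(101378548425)%Z::(-91067653600)%Z::(101378548425)%Z::(-93137373000)%Z::(101378548425)%Z::(-94568226192)%Z::nil))::((137599205865109259671464827160302306988568593390315086548554011230863360)%Z, ((0)%Z::(197525963751270)%Z::(1063784028615)%Z::(117041396010693)%Z::(1276540834338)%Z::(82548009836160)%Z::(1367722322505)%Z::(63385017516975)%Z::(1418378704820)%Z::(51190386041130)%Z::(1450614584475)%Z::(42747948865545)%Z::(1470514752630)%Z::nil))::((1480567518351974726751826082871773813185229172177699799523890141593600)%Z, ((0)%Z::(0)%Z::(958971550646109)%Z::(8297515423197)%Z::(798605285401638)%Z::(11853593461710)%Z::(646029129969795)%Z::(13829192371995)%Z::(531621453099100)%Z::(15086391678540)%Z::(445756999966425)%Z::(15956760429225)%Z::(379837007781858)%Z::nil))::((37149471841870980464049116096730820699761730536983419438545099722588160)%Z,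 ((0)%Z::(0)%Z::(0)%Z::(98245880305716)%Z::(1185359346171)%Z::(107733177625645)%Z::(1975598910285)%Z::(101472253930775)%Z::(2514398613090)%Z::(92407654943310)%Z::(2901229168950)%Z::(83552896121310)%Z::(3183496903125)%Z::nil))::((159212677767273029697029153885469831491682237952337784033916786531368960)%Z, ((0)%Z::(0)%Z::(0)%Z::(0)%Z::(22832561950055)%Z::(395119782057)%Z::(30115208881953)%Z::(754319583927)%Z::(31333191091818)%Z::(1044442500822)%Z::(30234618772302)%Z::(1276540834338)%Z::(28301412091689)%Z::nil))::((8671453645934251481849179352507974095144953828466833142769708841765437440)%Z, ((0)%Z::(0)%Z::(0)%Z::(0)%Z::(0)%Z::(1603420994578)%Z::(35919980187)%Z::(2553041054333)%Z::(77366111172)%Z::(3019128602448)%Z::(116049166758)%Z::(3207910523202)%Z::(149395756356)%Z::nil))::((563198429544593740722965010167928036489219052099220114312193192713256960)%Z, ((0)%Z::(0)%Z::(0)%Z::(0)%Z::(0)%Z::(0)%Z::(2905358615745)%Z::(96707638965)%Z::(5195073282476)%Z::(232098333516)%Z::(6573719755890)%Z::(375453186570)%Z::(7279243086060)%Z::nil))::((2919145423228730298498309714466790988340675851660561912090758426943238963200)%Z, ((0)%Z::(0)%Z::(0)%Z::(0)%Z::(0)%Z::(0)%Z::(0)%Z::(21526522986)%Z::(921025133)%Z::(44827517247)%Z::(2438007705)%Z::(63784739535)%Z::(4164298875)%Z::nil))::((9675084930042192167293206497552660504814904261655033157107175011623328808960)%Z, ((0)%Z::(0)%Z::(0)%Z::(0)%Z::(0)%Z::(0)%Z::(0)%Z::(0)%Z::(5009133913)%Z::(379245643)%Z::(11064088245)%Z::(1097816335)%Z::(16348369455)%Z::nil))::((228382452333335604333193045979701317012699620624806146695773128674934874177536)%Z,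 ((0)%Z::(0)%Z::(0)%Z::(0)%Z::(0)%Z::(0)%Z::(0)%Z::(0)%Z::(0)%Z::(589026550)%Z::(59880891)%Z::(1508834569)%Z::(171832122)%Z::nil))::((6433573990167810970333792946059172425074174779106105622983048856033444761698304)%Z, ((0)%Z::(0)%Z::(0)%Z::(0)%Z::(0)%Z::(0)%Z::(0)%Z::(0)%Z::(0)%Z::(0)%Z::(31031761)%Z::(13442649)%Z::(89047662)%Z::nil))::((3332375327767034615704500698190889658279914796970587848905404908406215075221827316061569024000)%Z, ((0)%Z::(0)%Z::(0)%Z::(0)%Z::(0)%Z::(0)%Z::(0)%Z::(0)%Z::(0)%Z::(0)%Z::(0)%Z::(1)%Z::(0)%Z::nil))::nil).
Definition g12 : list Z := ((1)%Z::(-1)%Z::(1)%Z::(-1)%Z::(1)%Z::(-1)%Z::(1)%Z::(-1)%Z::(1)%Z::(-1)%Z::(1)%Z::(-1)%Z::(1)%Z::nil).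
Definition nu12 : list Z := ((16349173436888224496990200222230382243145730344512479048003064106446599960838013303067136657195008000)%Z::(16234667389564452088410635855916960319604998236762706817662658838856975363829762754649521188241408000)%Z::(-5526061843845256438049776318285742030075731520004007836227958213875283051618171466634122531700736000)%Z::(16234667389564452088410635855916960319604998236762706817662658838856975363829762754649521188241408000)%Z::(-9901108899991952625057771626388966884720023892907305213074162677939659654109408420574374369479884800)%Z::(16234667389564452088410635855916960319604998236762706817662658838856975363829762754649521188241408000)%Z::(-11776129066911965276632626758433206108139006338437289803151107448252963912319938543691625157099520000)%Z::(16234667389564452088410635855916960319604998236762706817662658838856975363829762754649521188241408000)%Z::(-12817806937423083416396435165124450121149552141509503464304965653982577389103566389867875594665984000)%Z::(16234667389564452088410635855916960319604998236762706817662658838856975363829762754649521188241408000)%Z::(-13480692855021067687155222333018878129428990379828184885039239057628695056147693201070944054935552000)%Z::(16234667389564452088410635855916960319604998236762706817662658838856975363829762754649521188241408000)%Z::(-13939353710484942507795517746392171743194530645771531140441955344406919167438102284311066392395776000)%Z::nil).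
Lemma key12 : KeyP 12.
Proof.
  intros a Ha. exists (fun j => / IZR 319506432 * evL 0 (nth j Ms12 nil) a). split.
  - apply sum_part. reflexivity. vm_compute. reflexivity.
  - apply (keyquad 12 319506432 10055728004817972356548485623317090642666944404322266759088906357676315 Ms12 cs12 g12 nu12 a).
    + reflexivity.
    + reflexivity.
    + lia.
    + vm_compute. reflexivity.
    + vm_compute. reflexivity.
    + cbv [evL g12]. cbv [sum_f_R0 pow] in Ha. lra.
Qed.

Definition Ms13 : list (list Z) := (((3665654325)%Z::(-42902475)%Z::(-42902475)%Z::(-42902475)%Z::(-42902475)%Z::(-42902475)%Z::(-42902475)%Z::(-42902475)%Z::(-42902475)%Z::(-42902475)%Z::(-42902475)%Z::(-42902475)%Z::(-42902475)%Z::(-42851787)%Z::nil)::((514829700)%Z::(4223386500)%Z::(514829700)%Z::(514829700)%Z::(514829700)%Z::(514829700)%Z::(514829700)%Z::(514829700)%Z::(514829700)%Z::(514829700)%Z::(514829700)%Z::(514829700)%Z::(514829700)%Z::(505655172)%Z::nil)::((3861222750)%Z::(3861222750)%Z::(7569779550)%Z::(3861222750)%Z::(3861222750)%Z::(3861222750)%Z::(3861222750)%Z::(3861222750)%Z::(3861222750)%Z::(3861222750)%Z::(3861222750)%Z::(3861222750)%Z::(3861222750)%Z::(3856660830)%Z::nil)::((-12870742500)%Z::(-12870742500)%Z::(-12870742500)%Z::(-9162185700)%Z::(-12870742500)%Z::(-12870742500)%Z::(-12870742500)%Z::(-12870742500)%Z::(-12870742500)%Z::(-12870742500)%Z::(-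12870742500)%Z::(-12870742500)%Z::(-12870742500)%Z::(-12598547940)%Z::nil)::((-54700655625)%Z::(-54700655625)%Z::(-54700655625)%Z::(-54700655625)%Z::(-50992098825)%Z::(-54700655625)%Z::(-54700655625)%Z::(-54700655625)%Z::(-54700655625)%Z::(-54700655625)%Z::(-54700655625)%Z::(-54700655625)%Z::(-54700655625)%Z::(-54636028425)%Z::nil)::((87521049000)%Z::(87521049000)%Z::(87521049000)%Z::(87521049000)%Z::(87521049000)%Z::(91229605800)%Z::(87521049000)%Z::(87521049000)%Z::(87521049000)%Z::(87521049000)%Z::(87521049000)%Z::(87521049000)%Z::(87521049000)%Z::(85233246120)%Z::nil)::((277149988500)%Z::(277149988500)%Z::(277149988500)%Z::(277149988500)%Z::(277149988500)%Z::(277149988500)%Z::(280858545300)%Z::(277149988500)%Z::(277149988500)%Z::(277149988500)%Z::(277149988500)%Z::(277149988500)%Z::(277149988500)%Z::(276822544020)%Z::nil)::((-237557133000)%Z::(-237557133000)%Z::(-237557133000)%Z::(-237557133000)%Z::(-237557133000)%Z::(-237557133000)%Z::(-237557133000)%Z::(-233848576200)%Z::(-237557133000)%Z::(-237557133000)%Z::(-237557133000)%Z::(-237557133000)%Z::(-237557133000)%Z::(-229371021000)%Z::nil)::((-623587474125)%Z::(-623587474125)%Z::(-623587474125)%Z::(-623587474125)%Z::(-623587474125)%Z::(-623587474125)%Z::(-623587474125)%Z::(-623587474125)%Z::(-619878917325)%Z::(-623587474125)%Z::(-623587474125)%Z::(-623587474125)%Z::(-623587474125)%Z::(-622850724045)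%Z::nil)::((277149988500)%Z::(277149988500)%Z::(277149988500)%Z::(277149988500)%Z::(277149988500)%Z::(277149988500)%Z::(277149988500)%Z::(277149988500)%Z::(277149988500)%Z::(280858545300)%Z::(277149988500)%Z::(277149988500)%Z::(277149988500)%Z::(262988014740)%Z::nil)::((637444973550)%Z::(637444973550)%Z::(637444973550)%Z::(637444973550)%Z::(637444973550)%Z::(637444973550)%Z::(637444973550)%Z::(637444973550)%Z::(637444973550)%Z::(637444973550)%Z::(641153530350)%Z::(637444973550)%Z::(637444973550)%Z::(636691851246)%Z::nil)::((-115899086100)%Z::(-115899086100)%Z::(-115899086100)%Z::(-115899086100)%Z::(-115899086100)%Z::(-115899086100)%Z::(-115899086100)%Z::(-115899086100)%Z::(-115899086100)%Z::(-115899086100)%Z::(-115899086100)%Z::(-112190529300)%Z::(-115899086100)%Z::(-104191457556)%Z::nil)::((-241456429375)%Z::(-241456429375)%Z::(-241456429375)%Z::(-241456429375)%Z::(-241456429375)%Z::(-241456429375)%Z::(-241456429375)%Z::(-241456429375)%Z::(-241456429375)%Z::(-241456429375)%Z::(-241456429375)%Z::(-241456429375)%Z::(-237747872575)%Z::(-241171155775)%Z::nil)::nil).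
Definition cs13 : list (Z * list Z) := (((39620661961807667051256312577061157372168099396241140042683626189468760668884172800)%Z, ((0)%Z::(562915913175)%Z::(-376396470450)%Z::(562915913175)%Z::(-451675764540)%Z::(562915913175)%Z::(-483938319150)%Z::(562915913175)%Z::(-501861960600)%Z::(562915913175)%Z::(-513267914250)%Z::(562915913175)%Z::(-521164343700)%Z::(562914752983)%Z::nil))::((431754698763058834619967959670859152937624772300874279519003001867468800)%Z, ((0)%Z::(96750826066719825)%Z::(525864473984850)%Z::(56663127261725985)%Z::(631037368781820)%Z::(39482684916728625)%Z::(676111466551950)%Z::(29937994725063425)%Z::(701152631979800)%Z::(23864100966731025)%Z::(717087919070250)%Z::(19659097595577825)%Z::(728120040902100)%Z::(16578160347621873)%Z::nil))::((14606716598344683248634313666862416413592845600140462404016714010887192576000)%Z, ((0)%Z::(0)%Z::(272535720617160)%Z::(2286367278195)%Z::(230892975481740)%Z::(3266238968850)%Z::(190153253933500)%Z::(3810612130325)%Z::(159426650273800)%Z::(4157031414900)%Z::(136307722236000)%Z::(4396860150375)%Z::(118492065157620)%Z::(4568232431334)%Z::nil))::((43421089555520423505052412146532664114642320979193897914150282656166707200)%Z, ((0)%Z::(0)%Z::(0)%Z::(2460995883366735)%Z::(30049398513420)%Z::(2662875537572250)%Z::(50082330855700)%Z::(2473524331794425)%Z::(63741148361800)%Z::(2220196544472900)%Z::(73547478879000)%Z::(1977378204630675)%Z::(80902226766900)%Z::(1761937387482558)%Z::nil))::((60501398732814141259993904641628211217603193160418004657070602767679304499200)%Z, ((0)%Z::(0)%Z::(0)%Z::(0)%Z::(33786119098160)%Z::(544373161475)%Z::(45502135768050)%Z::(1039257853725)%Z::(48388621020600)%Z::(1438972412850)%Z::(47774941983300)%Z::(1758744060150)%Z::(45774166977000)%Z::(2014006298733)%Z::nil))::((821624348967770691922247273996173884841815011324191290636300653720987972403200)%Z,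 ((0)%Z::(0)%Z::(0)%Z::(0)%Z::(0)%Z::(4377263191275)%Z::(98976938450)%Z::(6853078847125)%Z::(213181098200)%Z::(7962232893090)%Z::(319771647300)%Z::(8304753222150)%Z::(413822131800)%Z::(8238512070789)%Z::nil))::((4948751164516521494383642151253671091343938619811001735349996494430147497164800)%Z, ((0)%Z::(0)%Z::(0)%Z::(0)%Z::(0)%Z::(0)%Z::(927172662800)%Z::(26647637275)%Z::(1706896458680)%Z::(63954329460)%Z::(2227593459000)%Z::(103455532950)%Z::(2542805449800)%Z::(141007963668)%Z::nil))::((83599173865734390159240186345354498751896446454538794690287518101723414528000)%Z, ((0)%Z::(0)%Z::(0)%Z::(0)%Z::(0)%Z::(0)%Z::(0)%Z::(3266463658955)%Z::(140090435960)%Z::(6635279111220)%Z::(370827624600)%Z::(9195625221750)%Z::(644069032200)%Z::(10900920217044)%Z::nil))::((386666766180594446108420472301644694389800354664572953086650816578967928688135372800)%Z, ((0)%Z::(0)%Z::(0)%Z::(0)%Z::(0)%Z::(0)%Z::(0)%Z::(0)%Z::(814409160)%Z::(44785945)%Z::(1897147250)%Z::(129643525)%Z::(2931391100)%Z::(237416751)%Z::nil))::((31554226305713690978767428470205972255268906872465200580317272720496342650060800)%Z, ((0)%Z::(0)%Z::(0)%Z::(0)%Z::(0)%Z::(0)%Z::(0)%Z::(0)%Z::(0)%Z::(37402926715)%Z::(3795019550)%Z::(91148733775)%Z::(11927204300)%Z::(144854870589)%Z::nil))::((32069162239767586185994972682859884845916836167553870576832880220232196764467200)%Z, ((0)%Z::(0)%Z::(0)%Z::(0)%Z::(0)%Z::(0)%Z::(0)%Z::(0)%Z::(0)%Z::(0)%Z::(21442849400)%Z::(2981801075)%Z::(60090442500)%Z::(9303219354)%Z::nil))::((344249851215085229675640298970223830611425753403981236856338511229666732995824844800)%Z,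 ((0)%Z::(0)%Z::(0)%Z::(0)%Z::(0)%Z::(0)%Z::(0)%Z::(0)%Z::(0)%Z::(0)%Z::(0)%Z::(43020825)%Z::(47143100)%Z::(134224974)%Z::nil))::((50061362225410806296013530365756606844788656473632337209113383483956936002019077528055468523520000)%Z, ((0)%Z::(0)%Z::(0)%Z::(0)%Z::(0)%Z::(0)%Z::(0)%Z::(0)%Z::(0)%Z::(0)%Z::(0)%Z::(0)%Z::(1)%Z::(0)%Z::nil))::nil).
Definition g13 : list Z := ((1)%Z::(-1)%Z::(1)%Z::(-1)%Z::(1)%Z::(-1)%Z::(1)%Z::(-1)%Z::(1)%Z::(-1)%Z::(1)%Z::(-1)%Z::(1)%Z::(-1)%Z::nil).
Definition nu13 : list Z := ((12521918394481592488996125590197171091233382443718036550571400020512086254706099718875801829867061248000000)%Z::(12447229787553784833459481138255999213918459641274220162449534284205312903152575519067410777826459648000000)%Z::(-4223765202779069266689804831359838281954409349535223108938377164375210985937716039497527977982754816000000)%Z::(12447229787553784833459481138255999213918459641274220162449534284205312903152575519067410777826459648000000)%Z::(-7572901922231201617826990915671240156591967708185875040840332601352670434066479191172193939552718028800000)%Z::(12447229787553784833459481138255999213918459641274220162449534284205312903152575519067410777826459648000000)%Z::(-9008246230567829768314356380376126674293778433321868725941170645771581626121663399032765065939845120000000)%Z::(12447229787553784833459481138255999213918459641274220162449534284205312903152575519067410777826459648000000)%Z::(-9805659735199289851918448305212174739683673280619642995441636226004310066152321292288637913932693504000000)%Z::(1244722978755378483345948113825599921391845964127422016244953428420531290315257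5519067410777826459648000000)%Z::(-10313104692692037177848324984653296235840879092536408439669205231606955437080921769815102453564506112000000)%Z::(12447229787553784833459481138255999213918459641274220162449534284205312903152575519067410777826459648000000)%Z::(-10664412740187016095799778070420226502411252346940322977980599158562633001569952869641116365617299456000000)%Z::(12447318029924602757470714556234332494693457792476692098277971248050450455884522686093086749332668416000000)%Z::nil).
Lemma key13 : KeyP 13.
Proof.
  intros a Ha. exists (fun j => / IZR 1236185600 * evL 0 (nth j Ms13 nil) a). split.
  - apply sum_part. reflexivity. vm_compute. reflexivity.
  - apply (keyquad 13 1236185600 514227758062168804283204582347906794657589504542143927556309184748652971001 Ms13 cs13 g13 nu13 a).
    + reflexivity.
    + reflexivity.
    + lia.
    + vm_compute. reflexivity.
    + vm_compute. reflexivity.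
    + cbv [evL g13]. cbv [sum_f_R0 pow] in Ha. lra.
Qed.


Theorem lemma8 (p : nat) (hp1 : (1 <= p)%nat) (hp2 : (p <= 13)%nat) :
  exists c C : R, 0 < c /\ 0 < C /\
    forall eta : R -> R, is_poly_deg p eta -> eta (-1) = 0 ->
      exists psi : R -> R, is_poly_deg (p - 1) psi /\ psi 1 = eta 1 /\
        J psi eta >= c * sqnorm eta /\ sqnorm psi <= C * sqnorm eta.
Proof.
  apply main_from_key.
  destruct p as [|p]; [lia|].
  destruct p as [|p]; [exact key1|].
  destruct p as [|p]; [exact key2|].
  destruct p as [|p]; [exact key3|].
  destruct p as [|p]; [exact key4|].
  destruct p as [|p]; [exact key5|].
  destruct p as [|p]; [exact key6|].
  destruct p as [|p]; [exact key7|].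
  destruct p as [|p]; [exact key8|].
  destruct p as [|p]; [exact key9|].
  destruct p as [|p]; [exact key10|].
  destruct p as [|p]; [exact key11|].
  destruct p as [|p]; [exact key12|].
  destruct p as [|p]; [exact key13|].
  lia.
Qed.
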